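(* Let $X$ and $Y$ be Hausdorff topological spaces with no isolated points. Then every topological arc contained in the product space $X\times Y$ has empty interior in $X\times Y$.
   Context: A topological arc is a subset of a topological space that is homeomorphic to $\mathbb{R}$. *)

(* Defs.v *)
From HB Require Import structures.
From mathcomp Require Import all_boot all_order all_algebra.
From mathcomp Require Import all_classical all_reals all_analysis.
Set Implicit Arguments. Unset Strict Implicit. Unset Printing Implicit Defensive.
Import Order.TTheory GRing.Theory Num.Theory.
Import numFieldTopology.Exports.
Local Open Scope classical_set_scope.

(* x is an isolated point of T iff the singleton {x} is open. *)
Definition no_isolated_points (T : topologicalType) : Prop :=
  forall x : T, ~ open [set x].

(* A is a topological arc: A (with the subspace topology) is homeomorphic to
   the real line R. *)
Definition is_arc (R : realType) (T : topologicalType) (A : set T) : Prop :=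
  exists (f : R -> T) (g : T -> R),
    [/\ continuous f, range f = A, cancel f g & {within A, continuous g}].

(* Main.v *)
Require Import Defs.
From HB Require Import structures.
From mathcomp Require Import all_boot all_order all_algebra.
From mathcomp Require Import all_classical all_reals all_analysis.
From mathcomp Require Import lra.
Import Order.TTheory GRing.Theory Num.Theory.
Import numFieldTopology.Exports.
Local Open Scope classical_set_scope.
Local Open Scope ring_scope.
Set Implicit Arguments. Unset Strict Implicit.

Lemma line1_connected (X Y : topologicalType) (x : X) (P : set Y) :
  connected P -> connected ([set x] `*` P).
Proof.
move=> cP.
have -> : [set x] `*` P = (fun y => (x, y)) @` P.
  apply/seteqP; split => [[a b] [/= -> Pb]|_ [b Pb <-]]; last by split.
  by exists b.
apply: connected_continuous_connected => //.
apply: continuous_subspaceT => y; apply: cvg_pair; [exact: cvg_cst|exact: cvg_id].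
Qed.

Lemma line2_connected (X Y : topologicalType) (y : Y) (P : set X) :
  connected P -> connected (P `*` [set y]).
Proof.
move=> cP.
have -> : P `*` [set y] = (fun x => (x, y)) @` P.
  apply/seteqP; split => [[a b] [/= Pa ->]|_ [b Pb <-]]; last by split.
  by exists a.
apply: connected_continuous_connected => //.
apply: continuous_subspaceT => x; apply: cvg_pair; [exact: cvg_id|exact: cvg_cst].
Qed.

Lemma cross_connected (X Y : topologicalType) (P1 : set X) (P2 : set Y)
  x0 y0 x1 y1 : connected P1 -> connected P2 -> P1 x1 -> P2 y1 ->
  x1 != x0 -> y1 != y0 -> connected ((P1 `*` P2) `\` [set (x0, y0)]).
Proof.
move=> c1 c2 Px1 Py1 nx ny.
pose T (q : X * Y) := if q.1 == x0 then (P1 `*` [set q.2]) `|` ([set x1] `*` P2)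
  else ([set q.1] `*` P2) `|` (P1 `*` [set y1]).
have -> : (P1 `*` P2) `\` [set (x0, y0)] =
  \bigcup_(q in (P1 `*` P2) `\` [set (x0, y0)]) T q.
  apply/seteqP; split => [q Vq|r [q [[Pq1 Pq2] nq] Tr]].
    exists q => //; case: Vq => [[Pq1 Pq2] _]; rewrite /T; case: ifP => _; [left|left]; by split.
  move: Tr; rewrite /T; case: ifPn => [/eqP q1|q1] [[/= r1 r2]|[/= r1 r2]].
  - split; first by split => //; rewrite r2.
    move=> /= rE; apply: nq.
    by rewrite [q]surjective_pairing q1 -r2 rE.
  - split; first by split => //; rewrite r1.
    by move=> /= rE; move: nx; rewrite -r1 rE eqxx.
  - split; first by split => //; rewrite r1.
    by move=> /= rE; move: q1; rewrite -r1 rE eqxx.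
  - split; first by split => //; rewrite r2.
    by move=> /= rE; move: ny; rewrite -r2 rE eqxx.
apply: bigcup_connected.
  exists (x1, y1) => q _; rewrite /T; case: ifP => _; [right|right]; by split.
move=> q [[Pq1 Pq2] nq]; rewrite /T; case: ifPn => [_|_].
  apply: connectedU; [exists (x1, q.2); split; split => //|exact: line2_connected|exact: line1_connected].
apply: connectedU; [exists (q.1, y1); split; split => //|exact: line1_connected|exact: line2_connected].
Qed.

Local Open Scope classical_set_scope.
Unset Implicit Arguments.

Theorem lemma3p5 (R : realType) (X Y : topologicalType)
    (hX : hausdorff_space X) (hY : hausdorff_space Y)
    (nX : no_isolated_points X) (nY : no_isolated_points Y)
    (A : set (X * Y)%type) :
  is_arc R A -> interior A = set0.
Proof.
move=> [f [g [cf rfA fK cg]]].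
apply/seteqP; split => // p Ap.
have Ap' : A p := interior_subset Ap.
have fgA : forall q, A q -> f (g q) = q.
  by move=> q; rewrite -rfA => -[u _ <-]; rewrite fK.
have fgp := fgA p Ap'.
have [[Q Rr] /= [nQ nR] sQR] := Ap.
have nQR : nbhs p (Q `*` Rr) by exists (Q, Rr).
have cfp : f x @[x --> g p] --> p by move: (cf (g p)); rewrite /continuous_at fgp.
have /nbhs_ballP[e /= e0 be] := cfp _ nQR.
have na : g p - e / 2 != g p.
  by rewrite lt_eqF // ltrBlDr ltrDl divr_gt0.
have nb : g p + e / 2 != g p.
  by rewrite gt_eqF // ltrDl divr_gt0.
have cgp : g @ nbhs p --> g p.
  rewrite (nbhs_subspace_interior Ap); exact: cg.
have nB : nbhs p (A `&` g @^-1` ball (g p) e).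
  apply: filterI => //; exact: cgp (nbhsx_ballx _ _ e0).
have [[Q' R'] /= [nQ' nR'] sQR'] := nB.
have [x1 [Qx1 nx1]] : exists x1, Q' x1 /\ x1 != p.1.
  apply: contrapT => /forallNP H; apply: (nX p.1); rewrite openE => x /= ->.
  apply: filterS nQ' => z Qz; apply/eqP; apply: contrapT => nz.
  by apply: (H z); split => //; apply/negP.
have [y1 [Ry1 ny1]] : exists y1, R' y1 /\ y1 != p.2.
  apply: contrapT => /forallNP H; apply: (nY p.2); rewrite openE => x /= ->.
  apply: filterS nR' => z Qz; apply/eqP; apply: contrapT => nz.
  by apply: (H z); split => //; apply/negP.
pose I := ball (g p) e.
have cI : connected I.
  by apply/connected_intervalP; rewrite /I ball_itv; exact: interval_is_interval.
pose P1 := (fst \o f) @` I.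
pose P2 := (snd \o f) @` I.
have c1 : connected P1.
  apply: connected_continuous_connected => //; apply: continuous_subspaceT => t.
  apply: continuous_comp; [exact: cf|exact: cvg_fst].
have c2 : connected P2.
  apply: connected_continuous_connected => //; apply: continuous_subspaceT => t.
  apply: continuous_comp; [exact: cf|exact: cvg_snd].
have [Ax1 Ix1] : (A `&` g @^-1` ball (g p) e) (x1, p.2).
  apply: sQR'; split => //=; exact: nbhs_singleton nR'.
have [Ay1 Iy1] : (A `&` g @^-1` ball (g p) e) (p.1, y1).
  apply: sQR'; split => //=; exact: nbhs_singleton nQ'.
have P1x1 : P1 x1 by exists (g (x1, p.2)) => //=; rewrite fgA.
have P2y1 : P2 y1 by exists (g (p.1, y1)) => //=; rewrite fgA.
pose V := (P1 `*` P2) `\` [set (p.1, p.2)].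
have cV : connected V := cross_connected c1 c2 P1x1 P2y1 nx1 ny1.
have VA : V `<=` A.
  move=> [q1 q2] [[/= [t It ft] [u Iu fu]] _]; apply: sQR; split => /=.
  - by rewrite -ft; have [] := be t It.
  - by rewrite -fu; have [] := be u Iu.
have cW : connected (g @` V).
  apply: connected_continuous_connected => //; exact: continuous_subspaceW cg.
move/connected_intervalP: cW => iW.
have inV : forall t, I t -> t != g p -> V (f t).
  move=> t It ntp; split; first by split; exists t.
  move=> /= E; move/eqP: ntp; apply; rewrite -(fK t) E -surjective_pairing.
  by [].
have Ia : I (g p - e / 2).
  by rewrite /I ball_itv /= in_itv /=; apply/andP; split; lra.
have Ib : I (g p + e / 2).
  by rewrite /I ball_itv /= in_itv /=; apply/andP; split; lra.
have Wa : (g @` V) (g p - e / 2).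
  exists (f (g p - e / 2)); last by rewrite fK.
  by apply: inV.
have Wb : (g @` V) (g p + e / 2).
  exists (f (g p + e / 2)); last by rewrite fK.
  by apply: inV.
have [v Vv gv] : (g @` V) (g p).
  by apply: (iW _ _ Wa Wb); apply/andP; split; lra.
case: (Vv) => _; rewrite /= -surjective_pairing -fgp -gv fgA //; exact: VA.
Qed.
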